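(* Let $G$ be a finite connected graph with chromatic number $\chi$ and let $c$ be a nice $\chi$-coloring of $G$. Then $h(c)\ge 2\chi-1$.
   Context: A proper $\chi$-coloring is a map $c:V(G)\to\{1,\dots,\chi\}$ with adjacent vertices receiving different colors; colors are considered modulo $\chi$. For such $c$, $D_c$ is the oriented graph on $V(G)$ with an arc $ab$ if and only if $\{a,b\}\in E(G)$ and $c(b)\equiv c(a)+1\pmod{\chi}$. The coloring $c$ is nice if $D_c$ is acyclic and has exactly one sink (vertex of out-degree $0$). For an acyclic oriented graph $D$, its level partition is the unique partition $(V_1,\dots,V_k)$ of $V(D)$ such that $V_i$ is the set of sinks of the subdigraph of $D$ induced on $V(D)\setminus(V_1\cup\dots\cup V_{i-1})$; $k$ is the height of the partition. The height $h(c)$ of a nice coloring $c$ is the height of the level partition of $D_c$, equivalently the number of vertices in a longest oriented path of $D_c$. *)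

(* Defs.v *)
From mathcomp Require Import all_boot.
Set Implicit Arguments. Unset Strict Implicit. Unset Printing Implicit Defensive.

Section Defs.
Variable T : finType.

(* A finite simple graph is a symmetric irreflexive relation e on T. *)

Definition proper_coloring (e : rel T) (k : nat) (c : T -> nat) : Prop :=
  (forall x, 1 <= c x <= k) /\ (forall x y, e x y -> c x != c y).

Definition colorable (e : rel T) (k : nat) : Prop :=
  exists c : T -> nat, proper_coloring e k c.

Definition chromatic_number (e : rel T) (k : nat) : Prop :=
  colorable e k /\ (forall j, colorable e j -> k <= j).

Definition connected_graph (e : rel T) : Prop := forall x y, connect e x y.

Definition Dc (e : rel T) (k : nat) (c : T -> nat) : rel T :=
  fun a b => e a b && (c b == (c a).+1 %[mod k]).

Definition acyclic (D : rel T) : Prop :=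
  forall (x : T) (p : seq T), path D x p -> x \notin p.

Definition is_sink (D : rel T) (x : T) : bool := [forall y, ~~ D x y].

Definition nice (e : rel T) (k : nat) (c : T -> nat) : Prop :=
  acyclic (Dc e k c) /\ #|[pred x | is_sink (Dc e k c) x]| = 1.

Definition is_dpath (D : rel T) (s : seq T) : bool :=
  if s is x :: p then path D x p && uniq s else false.

(* Height: number of vertices of a longest oriented path. *)
Definition height (D : rel T) : nat :=
  \max_(n < #|T|.+1 | [exists t : n.-tuple T, is_dpath D t]) n.
End Defs.

(* Main.v *)
Require Import Defs.
From mathcomp Require Import all_boot.
From mathcomp Require Import zify.
Set Implicit Arguments. Unset Strict Implicit.

Section Aux.
Variable T : finType.
Variable D : rel T.
Hypothesis acD : acyclic D.

Lemma path_uniq x p : path D x p -> uniq (x :: p).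
Proof.
elim: p x => [|y p IH] x //= /andP[Dxy Hp].
have := IH y Hp; rewrite /= => ->; rewrite andbT.
by have := @acD x (y :: p); rewrite /= Dxy Hp; apply.
Qed.

Lemma size_path_le x p : path D x p -> size (x :: p) <= #|T|.
Proof.
move=> /path_uniq Hu; rewrite -(card_uniqP Hu); exact: max_card.
Qed.

Arguments path_uniq {x p}.
Arguments size_path_le {x p}.

Definition Pv (v : T) (n : nat) : bool :=
  [exists t : n.-tuple T, (head v t == v) && is_dpath D t].

Definition Lf (v : T) : nat := \max_(i < #|T|.+1 | Pv v i) i.

Lemma Lf_ub v p : path D v p -> (size p).+1 <= Lf v.
Proof.
move=> Hp.
have Hs := size_path_le Hp.
have Hi : (size (v :: p)) < #|T|.+1 by rewrite ltnS.
apply: (@leq_bigmax_cond _ (fun i : 'I_#|T|.+1 => Pv v i) (fun i => nat_of_ord i) (Ordinal Hi)).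
apply/existsP; exists (in_tuple (v :: p)) => /=.
rewrite eqxx Hp; have := path_uniq Hp; by [].

Qed.

Lemma Lf_att v : exists p, path D v p /\ (size p).+1 = Lf v.
Proof.
have H1 : 1 < #|T|.+1 by rewrite ltnS; apply/card_gt0P; exists v.
have P1 : Pv v (Ordinal H1).
  by apply/existsP; exists (in_tuple [:: v]) => /=; rewrite eqxx.
rewrite /Lf (bigmax_eq_arg (Ordinal H1)) //.
case: arg_maxnP => // i /existsP[t /andP[/eqP Hh Hd]] _.
have Hsz := size_tuple t; move: Hh Hd Hsz.
case: (tval t) => [|x p] //= -> /andP[Hp _] <-.
by exists p.
Qed.

Lemma Lf_arc a b : D a b -> Lf b < Lf a.
Proof.
move=> Dab; have [p [Hp Hs]] := Lf_att b.
have := @Lf_ub a (b :: p); rewrite /= Dab Hp Hs; apply => //.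
Qed.

Lemma Lf_pos v : 0 < Lf v.
Proof. by have [p [_ <-]] := Lf_att v. Qed.

Lemma Lf_height v : Lf v <= height D.
Proof.
have [p [Hp <-]] := Lf_att v.
have Hs := size_path_le Hp.
have Hi : (size (v :: p)) < #|T|.+1 by rewrite ltnS.
apply: (@leq_bigmax_cond _ (fun i : 'I_#|T|.+1 => [exists t : i.-tuple T, is_dpath D t]) (fun i => nat_of_ord i) (Ordinal Hi)).
apply/existsP; exists (in_tuple (v :: p)) => /=.
rewrite Hp; have := path_uniq Hp; by [].
Qed.

Lemma Lf_sink v : exists p, path D v p /\ (size p).+1 = Lf v /\ is_sink D (last v p).
Proof.
have [p [Hp Hs]] := Lf_att v.
exists p; split => //; split => //.
apply/forallP => y; apply/negP => Dy.
have := @Lf_ub v (rcons p y); rewrite rcons_path Hp Dy size_rcons Hs.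
by move=> /(_ isT); rewrite ltnn.
Qed.
End Aux.

Lemma color_path (T : finType) (e : rel T) chi (c : T -> nat) v p :
  path (Dc e chi c) v p -> c (last v p) = c v + size p %[mod chi].
Proof.
elim: p v => [|y p IH] v /=; first by rewrite addn0.
move=> /andP[/andP[_ /eqP Hy] Hp].
by rewrite (IH y Hp) -modnDml Hy modnDml addSn addnS.
Qed.

Lemma mod_inj (chi x y : nat) : 1 <= x <= chi -> 1 <= y <= chi ->
  x = y %[mod chi] -> x = y.
Proof.
move=> /andP[x1 xc] /andP[y1 yc] H.
have : (x.-1 + 1 == y.-1 + 1 %[mod chi]) by rewrite !addn1 !prednK // H.
rewrite eqn_modDr => /eqP.
case: (ltnP 0 chi) => [c0|]; last by lia.
rewrite !modn_small; lia.
Qed.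

Theorem lemma6 (T : finType) (e : rel T) (chi : nat) (c : T -> nat) :
  symmetric e -> irreflexive e -> connected_graph e ->
  chromatic_number e chi -> proper_coloring e chi c -> nice e chi c ->
  2 * chi - 1 <= height (Dc e chi c).
Proof.
move=> esym eirr _ [_ chimin] [crange cprop] [acD sink1].
set D := Dc e chi c.
case: (posnP chi) => [->|chi0]; first by [].
have [s Hs] : exists s, [pred x | is_sink D x] =i pred1 s by apply/card1P/eqP.
have key v : c v + Lf D v = (c s).+1 %[mod chi].
  have [p [Hp [Hl Hk]]] := Lf_sink acD v.
  have : last v p \in pred1 s by rewrite -Hs.
  move=> /eqP Hls; have := color_path Hp; rewrite Hls => Hc.
  have H2 : (c s).+1 = (c v + size p).+1 %[mod chi].
    by rewrite -addn1 -modnDml Hc modnDml addn1.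
  by rewrite H2 -Hl addnS.
rewrite leqNgt; apply/negP => Hh.
have Lh v : Lf D v <= 2 * chi - 2.
  have := Lf_height acD v; rewrite -/D; lia.
pose g v := if Lf D v < chi then Lf D v else Lf D v - chi + 1.
have : colorable e chi.-1.
  exists g; split.
    move=> x; have := Lh x; have := Lf_pos D x; rewrite /g.
    case: ifP => Hc Hp Hl; move: chi0 Hc Hp Hl; move: (Lf D x) => L; clear; lia.
  move=> a b eab; apply/negP => /eqP Hg.
  have arc x y : e x y -> c y = (c x).+1 %[mod chi] -> Lf D y < Lf D x.
    by move=> exy Hc; apply: (Lf_arc acD); rewrite /D /Dc exy Hc eqxx.
  have cab : c a != c b by apply: cprop.
  have sameL : Lf D a = Lf D b -> False.
    move=> HL; move/negP: cab; apply; apply/eqP.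
    apply: (mod_inj (crange a) (crange b)).
    by apply/eqP; rewrite -(eqn_modDr (Lf D a)); rewrite {2}HL key key.
  have shifted x y : e x y -> Lf D x < chi -> chi <= Lf D y ->
      Lf D y = Lf D x + chi.-1 -> False.
    move=> exy Hx Hy Hxy.
    have : c y = (c x).+1 %[mod chi].
      apply/eqP; rewrite -(eqn_modDr (Lf D x + chi.-1)).
      rewrite -Hxy key.
      have -> : (c x).+1 + Lf D y = c x + Lf D x + chi by rewrite Hxy; lia.
      by rewrite modnDr key.
    by move/(arc x y exy); lia.
  move: Hg; rewrite /g; case: ifP => Ha; case: ifP => Hb => H.
  - exact: sameL.
  - by apply: (shifted a b eab) => //; [lia|lia].
  - by apply: (shifted b a); [rewrite esym|lia|lia|lia].
  - by apply: sameL; lia.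
move=> /chimin; lia.
Qed.
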